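(* Let $\Sigma$ be a finite alphabet and $f,f'\in H_\Sigma$ forests. Then: (1) no two distinct sibling nodes in $\Psi(f)$ carry the same label; (2) $\pi(f)=\pi(\Psi(f))$; (3) $\pi(f)=\pi(f')$ if and only if $\Psi(f)=\Psi(f')$.
   Context: Trees over $\Sigma$ are $\alpha[C]$ with $\alpha\in\Sigma$ and $C$ a finite set of trees (order and multiplicity of children ignored). Forests are finite sets of trees, with union written $+$. For a forest $f$, $\pi(f)\subseteq\Sigma^*$ is the set of (not necessarily maximal) label paths starting at a root, including the empty word. The map $\Psi:H_\Sigma\to H_\Sigma$ is defined recursively as follows. Write $f=\beta_1[f_1]+\dots+\beta_n[f_n]$ ($n\ge 0$), where $\beta_i\in\Sigma$ and the $f_i$ are forests. For each $\beta\in\{\beta_1,\dots,\beta_n\}$ let $F_\beta=\{f_i:\beta_i=\beta\}$. Then $$\Psi(f)=\sum_{\beta\in\{\beta_1,\dots,\beta_n\}}\beta\Big[\Psi\Big(\sum_{f'\in F_\beta}f'\Big)\Big].$$ *)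

(* Defs.v *)
(* Unordered trees with sets of children are represented by
   rose trees with lists of children, modulo hereditary set equality [teq]. *)
From mathcomp Require Import all_boot.
Set Implicit Arguments. Unset Strict Implicit. Unset Printing Implicit Defensive.

Section Trees.
Variable Sigma : finType.

Inductive tree : Type := Node : Sigma -> seq tree -> tree.
Definition forest := seq tree.

Definition label (t : tree) : Sigma := let: Node a _ := t in a.
Definition children (t : tree) : forest := let: Node _ c := t in c.

Fixpoint teq (t u : tree) {struct t} : bool :=
  match t, u with
  | Node a c, Node b d =>
      [&& a == b,
          all (fun x => has (fun y => teq x y) d) c &
          all (fun y => has (fun x => teq x y) c) d]
  end.

Definition feq (f g : forest) : bool :=
  all (fun x => has (fun y => teq x y) g) f &&
  all (fun y => has (fun x => teq x y) f) g.

Fixpoint tpath (t : tree) (w : seq Sigma) {struct t} : bool :=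
  match t with
  | Node b c =>
      match w with
      | [::] => true
      | a :: w' => (b == a) &&
          match w' with
          | [::] => true
          | _ => has (fun x => tpath x w') c
          end
      end
  end.

(* w \in pi(f) ; pi(f) always contains the empty word *)
Definition pi_mem (f : forest) (w : seq Sigma) : bool :=
  (w == [::]) || has (fun t => tpath t w) f.

Definition same_paths (f g : forest) : Prop := forall w, pi_mem f w = pi_mem g w.

Fixpoint tdepth (t : tree) : nat :=
  match t with Node _ c => (foldr maxn 0 (map tdepth c)).+1 end.
Definition fdepth (f : forest) : nat := foldr maxn 0 (map tdepth f).

(* Psi with fuel: for each root label beta occurring in f, a single node
   beta[Psi(sum of the child forests of the roots labelled beta)] *)
Fixpoint Psi_fuel (n : nat) (f : forest) : forest :=
  match n with
  | 0 => [::]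
  | n'.+1 =>
      [seq Node b (Psi_fuel n'
                     (flatten [seq children t | t <- f & label t == b]))
      | b <- undup (map label f)]
  end.

(* the fuel fdepth f is sufficient: child forests have strictly smaller depth *)
Definition Psi (f : forest) : forest := Psi_fuel (fdepth f) f.

Definition siblings_ok (c : forest) : bool :=
  all (fun x => all (fun y => (label x == label y) ==> teq x y) c) c.

Fixpoint tgood (t : tree) : bool :=
  match t with Node _ c => siblings_ok c && all tgood c end.

Definition fgood (f : forest) : bool := siblings_ok f && all tgood f.

End Trees.

(* Main.v *)
Require Import Defs.
From mathcomp Require Import all_boot.
From Stdlib Require List.
Set Implicit Arguments. Unset Strict Implicit. Unset Printing Implicit Defensive.

Section Proofs.
Variable Sigma : finType.
Implicit Types (f c d : forest Sigma) (t u : tree Sigma).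

Lemma allIn (T : Type) (a : pred T) (s : seq T) : all a s <-> (forall x, List.In x s -> a x).
Proof.
elim: s => [|y s IH] /=; first by split.
split.
- move=> /andP[ay /IH H] x [<-|xs] //; exact: H.
- move=> H; rewrite H /=; last by left. apply/IH => x xs; apply: H; by right.
Qed.

Lemma hasIn (T : Type) (a : pred T) (s : seq T) : has a s <-> exists x, List.In x s /\ a x.
Proof.
elim: s => [|y s IH] /=; first by split => // [[x []]].
split.
- case/orP => [ay|/IH [x [xs ax]]]; [exists y; by split; [left|] | exists x; by split; [right|]].
- move=> [x [[<-|xs] ax]]; first by rewrite ax.
  apply/orP; right; apply/IH; by exists x.
Qed.

Lemma mapIn (T U : Type) (g : T -> U) (s : seq T) y :
  List.In y (map g s) <-> exists x, List.In x s /\ y = g x.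
Proof.
elim: s y => [|z s IH] y /=; first by split => // [[x []]].
split.
- move=> [<-|/IH [x [xs ->]]]; [exists z; by split; [left|] | exists x; by split; [right|]].
- move=> [x [[<-|xs] ->]]; first by left.
  right; apply/IH; by exists x.
Qed.

Lemma memIn (T : eqType) (x : T) (s : seq T) : x \in s <-> List.In x s.
Proof.
elim: s => [|y s IH] //=; rewrite in_cons; split.
- case/orP => [/eqP ->|/IH]; by [left|right].
- move=> [->|/IH ->]; by rewrite ?eqxx ?orbT.
Qed.

Definition Fa f (a : Sigma) := flatten [seq children t | t <- f & label t == a].

Lemma Psi_fuelS n f : Psi_fuel n.+1 f =
  [seq Node b (Psi_fuel n (Fa f b)) | b <- undup (map (@label Sigma) f)].
Proof. by []. Qed.

Lemma fdepth_le f k : (fdepth f <= k) = all (fun t => tdepth t <= k) f.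
Proof. rewrite /fdepth; elim: f => //= t f IH; by rewrite geq_max IH. Qed.

Lemma tdepthE b c : tdepth (Node b c) = (fdepth c).+1.
Proof. by []. Qed.

Lemma fdepth0 f : fdepth f <= 0 -> f = [::].
Proof. case: f => // t f; rewrite fdepth_le /=; by case: t. Qed.

Lemma child_depth t (x : tree Sigma) k : tdepth t <= k.+1 -> List.In x (children t) -> tdepth x <= k.
Proof.
case: t => a c /=; rewrite -/(fdepth c) ltnS fdepth_le => /allIn H; exact: H.
Qed.

Lemma depth_F f n b : fdepth f <= n.+1 -> fdepth (Fa f b) <= n.
Proof.
rewrite !fdepth_le /Fa; elim: f => //= t f IH /andP[Ht Hf].
case: ifP => _ /=; rewrite ?all_cat ?IH ?andbT //.
apply/allIn => x; exact: child_depth Ht.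
Qed.

Lemma Psi_fuel_eq n m f : fdepth f <= n -> fdepth f <= m -> Psi_fuel n f = Psi_fuel m f.
Proof.
elim: n m f => [|n IH] [|m] f //.
- by move=> /fdepth0 ->.
- by move=> _ /fdepth0 ->.
move=> Hn Hm; rewrite !Psi_fuelS; apply: eq_map => b; congr Node.
by apply: IH; apply: depth_F.
Qed.

Lemma tpath_cons t a w : tpath t (a :: w) = (label t == a) && pi_mem (children t) w.
Proof. case: t => b c; case: w => [|x w] //=; by rewrite /pi_mem /= andbT. Qed.

Lemma has_F p f a : has p (Fa f a) = has (fun t => (label t == a) && has p (children t)) f.
Proof.
rewrite /Fa; elim: f => //= t f IH; case: (label t == a) => /=; by rewrite ?has_cat IH.
Qed.

Lemma pi_cons f a w : pi_mem f (a :: w) = has (fun t => label t == a) f && pi_mem (Fa f a) w.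
Proof.
rewrite {1}/pi_mem /=.
have -> : has (fun t => tpath t (a :: w)) f = has (fun t => (label t == a) && pi_mem (children t) w) f.
  by apply: eq_has => t; rewrite tpath_cons.
case: w => [|x w].
  rewrite /pi_mem /= andbT; by apply: eq_has => t; rewrite andbT.
rewrite /pi_mem /= has_F.
case h: (has _ f); last first.
  by rewrite andbF.
rewrite andbT; apply/esym; apply: (sub_has _ h) => t; by case/andP.
Qed.

Lemma lab_pi f b : (b \in map (@label Sigma) f) = pi_mem f [:: b].
Proof.
rewrite pi_cons /pi_mem /= andbT -has_pred1 has_map; by apply: eq_has => t /=; rewrite eq_sym.
Qed.

Lemma pi_Psi n f : fdepth f <= n -> forall w, pi_mem (Psi_fuel n f) w = pi_mem f w.
Proof.
elim: n f => [|n IH] f Hf w.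
  by rewrite (fdepth0 Hf).
case: w => [|a w]; first by rewrite /pi_mem.
rewrite !pi_cons Psi_fuelS.
have E : has (fun t => label t == a) f = (a \in map (@label Sigma) f).
  by rewrite -has_pred1 has_map; apply: eq_has => t /=; rewrite eq_sym.
rewrite E has_map.
have -> : has (preim (fun b => Node b (Psi_fuel n (Fa f b))) (fun t => label t == a))
   (undup [seq label i | i <- f]) = (a \in map (@label Sigma) f).
  by rewrite -mem_undup -has_pred1; apply: eq_has => b /=; rewrite eq_sym.
case ha: (a \in _) => //=.
rewrite /Fa filter_map /=.
have -> : [seq x <- undup [seq label i | i <- f] | label (Node x (Psi_fuel n (Fa f x))) == a]
   = [:: a].
  rewrite -(filter_pred1_uniq (undup_uniq [seq label i | i <- f])) ?mem_undup //.
rewrite /= cats0 -/(Fa f a) IH //; exact: depth_F.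
Qed.

Lemma teq_refl k t : tdepth t <= k -> teq t t.
Proof.
elim: k t => [|k IH] [a c] //= Hd; rewrite eqxx /=.
have H : all (fun x => has (fun y => teq x y) c) c.
  apply/allIn => x xc; apply/hasIn; exists x; split => //; apply: IH.
  exact: (child_depth (t := Node a c)).
have H' : all (fun y => has (fun x => teq x y) c) c.
  apply/allIn => x xc; apply/hasIn; exists x; split => //; apply: IH.
  exact: (child_depth (t := Node a c)).
by rewrite H H'.
Qed.

Lemma teq_path k t u w : tdepth t <= k -> teq t u -> tpath t w = tpath u w.
Proof.
elim: k t u w => [|k IH] [b c] [b' d] w //= Hd /and3P[/eqP <- H1 H2].
case: w => [|a w] //.
rewrite -!/(tpath (Node _ _) (a :: w)) !tpath_cons /=; congr andb.
rewrite /pi_mem; congr orb; apply/idP/idP => [/hasIn [x [xc px]]|/hasIn [y [yd py]]]; apply/hasIn.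
- move/allIn: H1 => /(_ x xc) /hasIn [y [yd txy]]; exists y; split => //.
  by rewrite -(IH x y) // (child_depth (t := Node b c)).
- move/allIn: H2 => /(_ y yd) /hasIn [x [xc txy]]; exists x; split => //.
  by rewrite (IH x y) // (child_depth (t := Node b c)).
Qed.

Lemma feq_pi c d : feq c d -> forall w, pi_mem c w = pi_mem d w.
Proof.
move=> /andP[H1 H2] w; rewrite /pi_mem; congr orb; apply/idP/idP => [/hasIn [x [xc px]]|/hasIn [y [yd py]]]; apply/hasIn.
- move/allIn: H1 => /(_ x xc) /hasIn [y [yd txy]]; exists y; split => //.
  by rewrite -(teq_path w (leqnn _) txy).
- move/allIn: H2 => /(_ y yd) /hasIn [x [xc txy]]; exists x; split => //.
  by rewrite (teq_path w (leqnn _) txy).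
Qed.

Lemma Psi_feq n f f' : fdepth f <= n -> fdepth f' <= n -> same_paths f f' ->
  feq (Psi_fuel n f) (Psi_fuel n f').
Proof.
elim: n f f' => [|n IH] f f' Hf Hf' Hs.
  by rewrite (fdepth0 Hf) (fdepth0 Hf').
have Hl : forall b, (b \in map (@label Sigma) f) = (b \in map (@label Sigma) f').
  by move=> b; rewrite !lab_pi Hs.
have T : forall b, b \in map (@label Sigma) f ->
   teq (Node b (Psi_fuel n (Fa f b))) (Node b (Psi_fuel n (Fa f' b))).
  move=> b bf /=; rewrite eqxx /=.
  have := IH (Fa f b) (Fa f' b) (depth_F b Hf) (depth_F b Hf').
  rewrite /feq; apply => w.
  have := Hs (b :: w); rewrite !pi_cons.
  have E : forall g, has (fun t => label t == b) g = (b \in map (@label Sigma) g).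
    by move=> g; rewrite -has_pred1 has_map; apply: eq_has => t /=; rewrite eq_sym.
  by rewrite !E -Hl bf.
rewrite !Psi_fuelS /feq; apply/andP; split; apply/allIn => x /mapIn [b [/memIn bin ->]]; apply/hasIn.
- exists (Node b (Psi_fuel n (Fa f' b))); split.
    by apply/mapIn; exists b; split => //; apply/memIn; rewrite mem_undup -Hl -mem_undup.
  by apply: T; rewrite -mem_undup.
- exists (Node b (Psi_fuel n (Fa f b))); split.
    by apply/mapIn; exists b; split => //; apply/memIn; rewrite mem_undup Hl -mem_undup.
  by apply: T; rewrite Hl -mem_undup.
Qed.

Lemma fgood_Psi n f : fgood (Psi_fuel n f).
Proof.
elim: n f => [|n IH] f //.
rewrite Psi_fuelS /fgood; apply/andP; split.
- apply/allIn => x /mapIn [b [_ ->]]; apply/allIn => y /mapIn [b' [_ ->]].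
  apply/implyP => /eqP /= <-; exact: (teq_refl (t := Node _ _) (leqnn _)).
- apply/allIn => x /mapIn [b [_ ->]] /=; by have := IH (Fa f b); rewrite /fgood.
Qed.

End Proofs.

Theorem mainTheorem6 (Sigma : finType) (f f' : forest Sigma) :
  fgood (Psi f) /\
  same_paths f (Psi f) /\
  (same_paths f f' <-> feq (Psi f) (Psi f')).
Proof.
split; first exact: fgood_Psi.
have P : forall g : forest Sigma, same_paths g (Psi g).
  by move=> g w; rewrite /Psi pi_Psi.
split; first exact: P.
split.
- move=> H; rewrite /Psi (@Psi_fuel_eq _ (fdepth f) (maxn (fdepth f) (fdepth f'))) ?leq_maxl //.
  rewrite (@Psi_fuel_eq _ (fdepth f') (maxn (fdepth f) (fdepth f'))) ?leq_maxr //.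
  by apply: Psi_feq; rewrite ?leq_maxl ?leq_maxr.
- move=> H w; by rewrite (P f w) (feq_pi H) -(P f' w).
Qed.
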